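(* For every $n\in\mathbb{N}^+$ there is a 2-layer MLP with ReGLU activation, $f(x) = W_2[(W_1x+b_1)\otimes\operatorname{ReLU}(Vx+b_2)]+b$, such that for all $x = [x_1;x_2]\in\mathbb{R}^{2n}$ with $x_1,x_2\in\mathbb{R}^n$, $f(x) = x_1\otimes x_2$.
   Context: $\otimes$ denotes elementwise multiplication, $\operatorname{ReLU}$ is applied elementwise, and $[x_1;x_2]$ denotes concatenation. *)

(* Defs.v *)
From HB Require Import structures.
From mathcomp Require Import all_boot all_order all_algebra.
From mathcomp Require Import reals.
Set Implicit Arguments. Unset Strict Implicit. Unset Printing Implicit Defensive.
Import Order.TTheory GRing.Theory Num.Theory.
Local Open Scope ring_scope.

Definition relu_v (R : realType) (k : nat) (v : 'cV[R]_k) : 'cV[R]_k :=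
  map_mx (fun a => Num.max a 0) v.

Definition hadamard (R : realType) (k : nat) (u v : 'cV[R]_k) : 'cV[R]_k :=
  map2_mx (fun a b => a * b) u v.

Definition reglu_mlp (R : realType) (d m p : nat)
  (W1 : 'M[R]_(m, d)) (b1 : 'cV[R]_m) (V : 'M[R]_(m, d)) (b2 : 'cV[R]_m)
  (W2 : 'M[R]_(p, m)) (b : 'cV[R]_p) (x : 'cV[R]_d) : 'cV[R]_p :=
  W2 *m hadamard (W1 *m x + b1) (relu_v (V *m x + b2)) + b.

(* Main.v *)
Require Import Defs.
From HB Require Import structures.
From mathcomp Require Import all_boot all_order all_algebra.
From mathcomp Require Import reals.
Import Order.TTheory GRing.Theory Num.Theory.
Local Open Scope ring_scope.

Lemma hadamard_col (R : realType) (k l : nat) (a b : 'cV[R]_k) (c d : 'cV[R]_l) :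
  hadamard (col_mx a c) (col_mx b d) = col_mx (hadamard a b) (hadamard c d).
Proof.
apply/matrixP => i j; rewrite !mxE.
by case: splitP => i' _; rewrite !mxE.
Qed.

Lemma relu_col (R : realType) (k l : nat) (a : 'cV[R]_k) (c : 'cV[R]_l) :
  relu_v (col_mx a c) = col_mx (relu_v a) (relu_v c).
Proof.
apply/matrixP => i j; rewrite !mxE.
by case: splitP => i' _; rewrite !mxE.
Qed.

Theorem mainTheorem7 (R : realType) (n : nat) (hn : (0 < n)%N) :
  exists (m : nat) (W1 : 'M[R]_(m, n + n)) (b1 : 'cV[R]_m)
         (V : 'M[R]_(m, n + n)) (b2 : 'cV[R]_m)
         (W2 : 'M[R]_(n, m)) (b : 'cV[R]_n),
    forall x1 x2 : 'cV[R]_n,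
      reglu_mlp W1 b1 V b2 W2 b (col_mx x1 x2) = hadamard x1 x2.
Proof.
exists (n + n)%N, (col_mx (row_mx 1%:M 0) (row_mx 1%:M 0)), 0,
  (col_mx (row_mx 0 1%:M) (row_mx 0 (- 1%:M))), 0, (row_mx 1%:M (- 1%:M)), 0.
move=> x1 x2; rewrite /reglu_mlp !addr0 !mul_col_mx !mul_row_col.
rewrite !mul1mx !mul0mx add0r addr0 mulNmx mul1mx relu_col hadamard_col.
rewrite mul_row_col mul1mx mulNmx mul1mx.
apply/matrixP => i j; rewrite !mxE.
rewrite ?sub0r.
have [h|h] := leP 0 (x2 i j).
  have e : Num.max (- x2 i j) 0 = 0 by apply/max_idPr; rewrite oppr_le0.
  by rewrite e mulr0 subr0.
have e : Num.max (- x2 i j) 0 = - x2 i j by apply/max_idPl; rewrite oppr_ge0 ltW.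
by rewrite e mulr0 sub0r mulrN opprK.
Qed.
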